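(* Let $h,k$ be integers with $k>0$, $\gcd(h,k)=1$ and $h+k$ odd. Then $$B_{1}(h,k)=(1-h)\bigl(4s(h,2k)+4s(2h,k)-10s(h,k)\bigr).$$
   Context: $[x]$ denotes the greatest integer $\le x$, and $((x))=x-[x]-\tfrac12$ if $x\notin\mathbb{Z}$, $((x))=0$ if $x\in\mathbb{Z}$. For integers $a,b$ with $b>0$: the Dedekind sum is $s(a,b)=\sum_{j=1}^{b-1}\left(\left(\frac{aj}{b}\right)\right)\left(\left(\frac{j}{b}\right)\right)$, and (for $\gcd(a,b)=1$) $$B_{1}(a,b)=\sum_{j=1}^{b-1}(-1)^{j+\left[\frac{aj}{b}\right]}\left[\frac{aj}{b}\right].$$ *)

(* Defs.v *)
From mathcomp Require Import all_boot all_order all_algebra.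
Set Implicit Arguments. Unset Strict Implicit. Unset Printing Implicit Defensive.
Import Order.TTheory GRing.Theory Num.Theory.
Local Open Scope ring_scope.

Definition sawtooth (x : rat) : rat :=
  if x \is a Num.int then 0 else x - (Num.floor x)%:~R - 1 / 2.

Definition dedekind_sum (a b : int) : rat :=
  \sum_(1 <= j < `|b|%N) sawtooth ((a * j%:Z)%:~R / b%:~R) * sawtooth ((j%:Z)%:~R / b%:~R).

Definition B1 (a b : int) : rat :=
  \sum_(1 <= j < `|b|%N)
     let f := Num.floor ((a * j%:Z)%:~R / b%:~R : rat) in
     (-1) ^ (j%:Z + f) * f%:~R.

(* Main.v *)
Require Import Defs.
From mathcomp Require Import all_boot all_order all_algebra.
From mathcomp Require Import ring lra zify.
Import Order.TTheory GRing.Theory Num.Theory.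
Local Open Scope ring_scope.

Lemma sawE {x : rat} {m : int} : m%:~R <= x < (m+1)%:~R ->
  sawtooth x = if x == m%:~R then 0 else x - m%:~R - 1/2.
Proof.
move=> H; have Hf := floor_def H.
rewrite /sawtooth intrEfloor Hf eq_sym.
by case: ifP.
Qed.

Lemma saw_int (x : rat) (n : int) : sawtooth (x + n%:~R) = sawtooth x.
Proof.
have H := floor_itv x.
rewrite (sawE H) (@sawE _ (Num.floor x + n)); last first.
  by rewrite !intrD; case/andP: H => H1 H2; apply/andP; split; rewrite intrD in H2; lra.
rewrite intrD (can_eq (addrK _)) /=. case: ifP => // _. ring.
Qed.

Lemma saw_val (x : rat) : 0 < x < 1 -> sawtooth x = x - 1/2.
Proof.
move=> H; rewrite (@sawE _ 0) ?subr0; last by rewrite /=; lra.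
by case: H => /andP [H _]; rewrite gt_eqF.
Qed.

Lemma saw0 : sawtooth 0 = 0.
Proof. by rewrite /sawtooth rpred0. Qed.

Lemma sawN (x : rat) : sawtooth (- x) = - sawtooth x.
Proof.
have H := floor_itv x.
rewrite (sawE H).
case: eqP => [->|Hx].
  by rewrite oppr0 /sawtooth ifT // rpredN intr_int.
rewrite (@sawE _ (- Num.floor x - 1)); last first.
  rewrite !intrD !intrN /=; case/andP: H => H1 H2; rewrite intrD in H2.
  apply/andP; split; first lra.
  rewrite lt_neqAle; apply/andP; split; last lra.
  apply/negP => /eqP E; apply: Hx; lra.
rewrite ifF. rewrite !intrD !intrN mulr1z; lra.
apply/negP=>/eqP E; rewrite !intrD !intrN mulr1z in E; case/andP: H => H1 H2; rewrite intrD in H2; lra.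
Qed.

Lemma sawV (x : rat) (m : int) : m%:~R < x < m%:~R + 1 -> sawtooth x = x - m%:~R - 1/2.
Proof.
move=> /andP [H1 H2]; rewrite (@sawE x m); last by rewrite intrD mulr1z; apply/andP; split; lra.
by rewrite gt_eqF.
Qed.

Lemma sawZ (x : rat) (m : int) : x = m%:~R -> sawtooth x = 0.
Proof. by move=> ->; rewrite /sawtooth intr_int. Qed.

Lemma saw_double (x : rat) : sawtooth (2 * x) = sawtooth x + sawtooth (x + 1/2).
Proof.
have /andP [H1 H2] := floor_itv x; rewrite intrD mulr1z in H2.
set n := Num.floor x in H1 H2 *.
have [E|NE] := eqVneq x n%:~R.
  rewrite (@sawZ (2*x) (2*n)); last by rewrite intrM E.
  rewrite (@sawZ x n) // (@sawV _ n); last by apply/andP; split; lra.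
  lra.
have H1' : n%:~R < x by rewrite lt_neqAle eq_sym NE H1.
rewrite (@sawV x n); last by apply/andP; split; lra.
have [L|L] := ltrP (x - n%:~R) (1/2).
  rewrite (@sawV (2*x) (2*n)); last by rewrite intrM; apply/andP; split; lra.
  rewrite (@sawV (x + 1/2) n); last by apply/andP; split; lra.
  rewrite intrM; lra.
have [E2|NE2] := eqVneq (x - n%:~R) (1/2).
  rewrite (@sawZ (2*x) (2*n+1)); last by rewrite intrD intrM mulr1z; lra.
  rewrite (@sawZ (x + 1/2) (n+1)); last by rewrite intrD mulr1z; lra.
  lra.
have L' : 1/2 < x - n%:~R by rewrite lt_neqAle eq_sym NE2 L.
rewrite (@sawV (2*x) (2*n+1)); last by rewrite intrD intrM mulr1z; apply/andP; split; lra.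
rewrite (@sawV (x + 1/2) (n+1)); last by rewrite intrD mulr1z; apply/andP; split; lra.
rewrite !intrD intrM mulr1z; lra.
Qed.

Lemma signz2 (z m : int) : (-1 : rat) ^ (z + 2 * m) = (-1) ^ z.
Proof.
rewrite exprzDr ?unitrN1 // -exprz_exp.
have -> : ((-1 : rat) ^ 2) = 1 by rewrite -exprnP expr2 mulrNN mulr1.
by rewrite exp1rz mulr1.
Qed.

Lemma sign_floor (x : rat) : x \isn't a Num.int ->
  (-1) ^ (Num.floor x) = 2 * sawtooth x - 4 * sawtooth (x / 2).
Proof.
move=> Hx.
have /andP [H1 H2] := floor_itv x; rewrite intrD mulr1z in H2.
set n := Num.floor x in H1 H2 *.
have NE : x != n%:~R by apply: contra Hx => /eqP ->; apply: intr_int.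
have H1' : n%:~R < x by rewrite lt_neqAle eq_sym NE H1.
rewrite (@sawV x n); last by apply/andP; split; lra.
have [q [r [Hn Hr]]] : exists q r : int, n = r + 2 * q /\ (r = 0 \/ r = 1).
  exists (n %/ 2)%Z, (n %% 2)%Z; lia.
rewrite Hn signz2.
rewrite Hn !intrD !intrM in H1' H2 *.
case: Hr => E; rewrite E ?mulr1z ?mulr0z ?add0r ?expr0z ?expr1z in H1' H2 *;
 (rewrite (@sawV (x/2) q); last by apply/andP; split; lra); lra.
Qed.

Lemma saw_eq (x y : rat) (m : int) : x = y + m%:~R -> sawtooth x = sawtooth y.
Proof. by move=> ->; apply: saw_int. Qed.

Definition sw (a : int) (n j : nat) : rat := sawtooth (a%:~R * j%:R / n%:R).
Definition ds (a : int) (n : nat) : rat := \sum_(0 <= j < n) sw a n j * sw 1 n j.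

Lemma sw0 a n : sw a n 0 = 0.
Proof. by rewrite /sw mulr0 mul0r saw0. Qed.

Lemma sum_zero (a : int) (n : nat) : (0 < n)%N -> \sum_(0 <= j < n) sw a n j = 0.
Proof.
move=> Hn.
have Hn' : (n%:R : rat) != 0 by rewrite pnatr_eq0 -lt0n.
have E : \sum_(0 <= j < n.+1) sw a n j = \sum_(0 <= j < n) sw a n j.
  rewrite big_nat_recr //= /sw mulrK // (@sawZ _ a) // addr0 //.
rewrite -E.
set S := \sum_(0 <= j < n.+1) sw a n j.
have : S = - S.
  rewrite {1}/S big_nat_rev /= /S -sumrN.
  apply: eq_big_nat => j /andP [_ Hj].
  rewrite add0n subSS /sw -sawN; apply: (@saw_eq _ _ a).
  rewrite natrB //; field; exact: Hn'.
move=> H; lra.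
Qed.

Lemma sum_half (F : nat -> rat) (K : nat) :
  \sum_(0 <= j < 2 * K) F j = \sum_(0 <= i < K) (F i + F (i + K)%N).
Proof.
rewrite big_split /= (@big_cat_nat _ _ _ K) //=; last by rewrite leq_pmull.
congr (_ + _).
by rewrite -{1}(add0n K) big_addn; congr (\sum_(0 <= i < _) _); lia.
Qed.

Lemma sum_parity (F : nat -> rat) (K : nat) :
  \sum_(0 <= j < 2 * K) F j = \sum_(0 <= i < K) (F (2 * i)%N + F (2 * i + 1)%N).
Proof.
elim: K => [|K IH]; first by rewrite !big_geq.
rewrite [RHS]big_nat_recr //= -IH.
have -> : (2 * K.+1 = (2 * K).+1.+1)%N by lia.
rewrite big_nat_recr //= big_nat_recr //= -addrA; congr (_ + _).
by rewrite addn1.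
Qed.

Lemma natzE (n : nat) : ((n%:Z)%:~R : rat) = n%:R.
Proof. by []. Qed.

Lemma int2E : ((2 : int)%:~R : rat) = 2.
Proof. by []. Qed.

Ltac fside := repeat (apply/andP; split); try done; apply/negP => /eqP ?; lra.
Ltac sawarg m := apply: (@saw_eq _ _ (m : int)); rewrite ?natrD ?natrM ?intrD ?intrM ?natzE ?int2E.

Lemma knopp (h : int) (K : nat) : (0 < K)%N ->
  ds (2 * h) K + ds h (2 * K) + ds (h + K%:Z) (2 * K) = 3 * ds h K.
Proof.
move=> HK.
have HK' : (K%:R : rat) != 0 by rewrite pnatr_eq0 -lt0n.
have HKp : (0 : rat) < K%:R by rewrite ltr0n.
have step1 : ds h (2 * K) + ds (h + K%:Z) (2 * K) =
   \sum_(0 <= i < K) (2 * (sw h K i * sw 1 K i) +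
      sw h K (2 * i + 1)%N * sw 1 (2 * K) (2 * i + 1)%N).
  rewrite /ds -big_split /= sum_parity; apply: eq_bigr => i _.
  have e1 : sw 1 (2 * K) (2 * i) = sw 1 K i.
    rewrite /sw; sawarg (0:int); field; fside.
  have e2 : sw h (2 * K) (2 * i) = sw h K i.
    by rewrite /sw; sawarg (0:int); field; fside.
  have e3 : sw (h + K%:Z) (2 * K) (2 * i) = sw h K i.
    by rewrite /sw; sawarg (i%:Z); field; fside.
  have e4 : sw h (2 * K) (2 * i + 1) + sw (h + K%:Z) (2 * K) (2 * i + 1) =
            sw h K (2 * i + 1).
    have e5 : sw (h + K%:Z) (2 * K) (2 * i + 1) = sawtooth (h%:~R * (2 * i + 1)%N%:R / (2 * K)%N%:R + 1/2).
      by rewrite /sw; sawarg (i%:Z); field; fside.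
    rewrite e5 /sw.
    rewrite -saw_double; congr sawtooth; rewrite ?natrD ?natrM; field; fside.
  rewrite e1 e2 e3 -e4; ring.
have step2 : ds (2 * h) K = \sum_(0 <= i < K) sw h K (2 * i)%N * sw 1 (2 * K) (2 * i)%N.
  rewrite /ds; apply: eq_bigr => i _; congr (_ * _); rewrite /sw; sawarg (0:int); field; fside.
have step3 : \sum_(0 <= j < 2 * K) sw h K j * sw 1 (2 * K) j = ds h K.
  rewrite sum_half /ds; apply: eq_bigr => i _.
  have e1 : sw h K (i + K) = sw h K i by rewrite /sw; sawarg h; field; fside.
  have e2 : sw 1 (2 * K) i + sw 1 (2 * K) (i + K) = sw 1 K i.
    have e5 : sw 1 (2 * K) (i + K) = sawtooth (1%:~R * i%:R / (2 * K)%N%:R + 1/2).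
      by rewrite /sw; sawarg (0:int); field; fside.
    rewrite e5 /sw.
    rewrite -saw_double; congr sawtooth; rewrite ?natrD ?natrM; field; fside.
  rewrite e1 -e2; ring.
rewrite -addrA step1 step2.
transitivity (2 * ds h K + \sum_(0 <= j < 2 * K) sw h K j * sw 1 (2 * K) j).
  rewrite sum_parity /ds mulr_sumr -!big_split /=; apply: eq_bigr => i _; ring.
rewrite step3; ring.
Qed.

Lemma sw1_prod (a : int) (n i : nat) : (i < n)%N ->
  sw a n i * sw 1 n i = sw a n i * (i%:R / n%:R - 1/2).
Proof.
move=> Hi; case: i Hi => [|i] Hi; first by rewrite sw0 !mul0r.
congr (_ * _); rewrite /sw mul1r saw_val // ?mul1r //.
have Hn : (0 : rat) < n%:R by rewrite ltr0n; lia.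
apply/andP; split; first by rewrite divr_gt0 // ltr0Sn.
by rewrite ltr_pdivrMr // mul1r ltr_nat.
Qed.

Lemma ds_alt (a : int) (n : nat) : (0 < n)%N ->
  ds a n = \sum_(0 <= i < n) i%:R / n%:R * sw a n i.
Proof.
move=> Hn.
have -> : ds a n = \sum_(0 <= i < n) (i%:R / n%:R * sw a n i - 1/2 * sw a n i).
  rewrite /ds; apply: eq_big_nat => i /andP [_ Hi]; rewrite sw1_prod //; ring.
by rewrite sumrB -mulr_sumr sum_zero // mulr0 subr0.
Qed.

Lemma ds_odd (q : int) (K : nat) : (0 < K)%N ->
  ds (2 * q + 1) (2 * K) = ds (2 * q + 1) K / 2
     - 1/2 * \sum_(0 <= i < K) sw (2 * q + 1) (2 * K) i.
Proof.
move=> HK.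
have HK' : (K%:R : rat) != 0 by rewrite pnatr_eq0 -lt0n.
have HKp : (0 : rat) < K%:R by rewrite ltr0n.
set a := 2 * q + 1.
rewrite [ds a K]ds_alt // mulr_suml mulr_sumr -sumrB /ds sum_half.
apply: eq_big_nat => i /andP [_ Hi].
rewrite sw1_prod; last by lia.
have e1 : sw a (2 * K) (i + K) = sawtooth (a%:~R * i%:R / (2 * K)%N%:R + 1/2).
  by rewrite /sw /a; sawarg q; field; fside.
have e2 : sw 1 (2 * K) (i + K) = i%:R / (2 * K)%N%:R.
  rewrite /sw mul1r (@sawV _ 0); last first.
    rewrite natrD natrM mulr0z; apply/andP; split.
      have Hi0 : (0:rat) <= i%:R := ler0n _ _. by apply: divr_gt0; lra.
    rewrite ltr_pdivrMr; last lra.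
    have : (i%:R : rat) < K%:R by rewrite ltr_nat.
    lra.
  rewrite mulr0z natrD natrM; field; fside.
have e3 : sw a K i = sawtooth (a%:~R * i%:R / (2 * K)%N%:R) +
            sawtooth (a%:~R * i%:R / (2 * K)%N%:R + 1/2).
  rewrite -saw_double /sw; congr sawtooth; rewrite natrM; field; fside.
rewrite e1 e2 e3 /sw; rewrite !natrM; field; fside.
Qed.

Lemma nonint {h : int} {K j : nat} : gcdz h K = 1 -> (0 < j < K)%N ->
  (h%:~R * j%:R / K%:R : rat) \isn't a Num.int.
Proof.
move=> Hg /andP [Hj0 HjK].
have HK' : (K%:R : rat) != 0 by rewrite pnatr_eq0; lia.
apply/negP => /intrP [m E].
have E2 : h * j%:Z = m * K%:Z.
  apply: (@intr_inj rat); rewrite !intrM !natzE.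
  by rewrite -E mulrVK // unitfE.
have D : (K%:Z %| j%:Z * h)%Z by rewrite mulrC E2 dvdz_mull.
rewrite Gauss_dvdzl in D; last by rewrite /coprimez gcdzC Hg.
have : (K %| j)%N by exact: D.
move/dvdn_leq => /(_ Hj0); lia.
Qed.

Definition fl (h : int) (K j : nat) : int := Num.floor (h%:~R * j%:R / K%:R : rat).

Lemma floor_strict {x : rat} : x \isn't a Num.int ->
  (Num.floor x)%:~R < x < (Num.floor x)%:~R + 1.
Proof.
move=> Hx; have /andP [H1 H2] := floor_itv x; rewrite intrD mulr1z in H2.
rewrite H2 andbT lt_neqAle H1 andbT; apply: contra Hx => /eqP <-; apply: intr_int.
Qed.

Lemma fl_rev (h : int) (K j : nat) : gcdz h K = 1 -> (0 < j < K)%N ->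
  fl h K (K - j) = h - 1 - fl h K j.
Proof.
move=> Hg Hj.
have HK' : (K%:R : rat) != 0 by rewrite pnatr_eq0; lia.
have /andP [H1 H2] := floor_strict (nonint Hg Hj).
rewrite /fl; apply: floor_def.
have -> : (h%:~R * (K - j)%:R / K%:R : rat) = h%:~R - h%:~R * j%:R / K%:R.
  rewrite natrB; last by lia. field; fside.
rewrite !intrD !intrN mulr1z; apply/andP; split; lra.
Qed.

Lemma signz_of (z : int) : (-1 : rat) ^ z = 1 \/ (-1 : rat) ^ z = -1.
Proof.
have [q [r [-> Hr]]] : exists q r : int, z = r + 2 * q /\ (r = 0 \/ r = 1).
  exists (z %/ 2)%Z, (z %% 2)%Z; lia.
rewrite signz2; case: Hr => ->; rewrite ?expr0z ?expr1z; tauto.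
Qed.

Lemma B1_pair (h : int) (K : nat) (m : int) : (0 < K)%N -> gcdz h K = 1 ->
  h + K%:Z = 2 * m + 1 ->
  2 * B1 h K%:Z = (h%:~R - 1) * \sum_(1 <= j < K) (-1) ^ (j%:Z + fl h K j).
Proof.
move=> HK Hg Hm.
set F := fun j : nat => (-1 : rat) ^ (j%:Z + fl h K j) * (fl h K j)%:~R.
have EB : B1 h K%:Z = \sum_(1 <= j < K) F j.
  by rewrite /B1 /F /fl; apply: eq_bigr => j _ /=; rewrite intrM.
have ER : \sum_(1 <= j < K) F j = \sum_(1 <= j < K) F (K - j)%N.
  rewrite big_nat_rev /=; apply: eq_big_nat => j /andP [Hj1 HjK].
  by congr F; lia.
rewrite EB.
have -> : 2 * \sum_(1 <= j < K) F j = \sum_(1 <= j < K) F j + \sum_(1 <= j < K) F (K - j)%N.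
  by rewrite -ER; ring.
rewrite -big_split /= mulr_sumr; apply: eq_big_nat => j Hj.
rewrite /F fl_rev //.
have -> : ((K - j)%N%:Z + (h - 1 - fl h K j)) = (j%:Z + fl h K j) + 2 * (m - j%:Z - fl h K j).
  rewrite -subzn; last by case/andP: Hj => _ /ltnW.
  set n := fl h K j; set kk := K%:Z; set jj := j%:Z.
  have Hm' : kk = 2 * m + 1 - h by rewrite -Hm; ring.
  rewrite Hm'; ring.
rewrite signz2; set s := (-1 : rat) ^ _.
rewrite !intrD !intrN mulr1z; ring.
Qed.

Lemma sum1_0 (G : nat -> rat) (K : nat) : (0 < K)%N -> G 0%N = 0 ->
  \sum_(1 <= j < K) G j = \sum_(0 <= j < K) G j.
Proof. by move=> HK H0; rewrite (big_ltn HK) H0 add0r. Qed.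

Lemma T_eq (h : int) (K : nat) : (0 < K)%N -> gcdz h K = 1 ->
  \sum_(1 <= j < K) (-1) ^ (j%:Z + fl h K j) =
  -4 * \sum_(0 <= j < K) sw (h + K%:Z) (2 * K) j.
Proof.
move=> HK Hg.
have HK' : (K%:R : rat) != 0 by rewrite pnatr_eq0 -lt0n.
have Hg' : gcdz (h + K%:Z) K = 1 by rewrite gcdzC gcdzDr gcdzC.
have -> : \sum_(1 <= j < K) (-1) ^ (j%:Z + fl h K j) =
   \sum_(1 <= j < K) (2 * sw (h + K%:Z) K j - 4 * sw (h + K%:Z) (2 * K) j).
  apply: eq_big_nat => j Hj.
  have Hx := nonint Hg' Hj.
  rewrite (_ : j%:Z + fl h K j = Num.floor ((h + K%:Z)%:~R * j%:R / K%:R : rat)); last first.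
    symmetry; apply: floor_def.
    have /andP [H1 H2] := floor_strict (nonint Hg Hj).
    have -> : ((h + K%:Z)%:~R * j%:R / K%:R : rat) = h%:~R * j%:R / K%:R + j%:R.
      rewrite intrD natzE; field; fside.
    rewrite /fl !intrD mulr1z natzE.
    apply/andP; split; lra.
  rewrite sign_floor // /sw; congr (_ - 4 * sawtooth _); rewrite natrM; field; fside.
rewrite sum1_0 //; last by rewrite !sw0; ring.
rewrite sumrB -!mulr_sumr sum_zero //; ring.
Qed.

Lemma ds_shift (h : int) (K : nat) : (0 < K)%N -> ds (h + K%:Z) K = ds h K.
Proof.
move=> HK.
have HK' : (K%:R : rat) != 0 by rewrite pnatr_eq0 -lt0n.
rewrite /ds; apply: eq_bigr => j _; congr (_ * _).
by rewrite /sw; sawarg (j%:Z); field; fside.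
Qed.

Lemma ds_conv (a : int) (n : nat) : (0 < n)%N -> dedekind_sum a n%:Z = ds a n.
Proof.
move=> Hn; rewrite /dedekind_sum /ds /= sum1_0 //; last first.
  by rewrite /sw mulr0 mul0r saw0 mul0r.
by apply: eq_bigr => j _; rewrite /sw intrM mulr1z mul1r.
Qed.

Theorem theorem18 (h k : int) (hk : 0 < k) (hcop : gcdz h k = 1)
  (hodd : odd `|(h + k)%R|%N) :
  B1 h k = (1 - h%:~R) *
    (4 * dedekind_sum h (2 * k) + 4 * dedekind_sum (2 * h) k
     - 10 * dedekind_sum h k).
Proof.
case: k hk hcop hodd => [K|K] //; rewrite ltz_nat => HK hcop hodd.
have [m Hm] : exists m : int, h + K%:Z = 2 * m + 1.
  move: hodd; case: (h + K%:Z) => n /= Ho.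
    have := odd_double_half n; rewrite Ho -muln2 => En.
    exists (n./2)%:Z; rewrite -{1}En PoszD PoszM mulrC addrC. reflexivity.
  have := odd_double_half n; rewrite /= in Ho; rewrite (negbTE Ho) -muln2 add0n => En.
  set p := n./2 in En *; exists (- p%:Z - 1); rewrite NegzE -En -addn1 !PoszD PoszM.
  have -> : Posz 2 = 2 by []. have -> : Posz 1 = 1 by []. ring.
have E2 : 2 * K%:Z = (2 * K)%N%:Z by [].
have HK2 : (0 < 2 * K)%N by rewrite muln_gt0.
rewrite E2 !ds_conv //.
have HB := @B1_pair h K m HK hcop Hm.
rewrite T_eq // in HB.
have HKn := @knopp h K HK.
have HO := @ds_odd m K HK.
rewrite -Hm ds_shift // in HO.
set P := \sum_(0 <= j < K) sw (h + K%:Z) (2 * K) j in HB HO.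
have X : 4 * ds h (2 * K) + 4 * ds (2 * h) K - 10 * ds h K = 2 * P by lra.
rewrite X.
have -> : B1 h K%:Z = ((h%:~R - 1) * (-4 * P)) / 2 by rewrite -HB; field.
by field.
Qed.
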